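(* Let $\vec u,\vec v$ be disjoint lists of $n$ Boolean variables and $\vec a$ a list of auxiliary variables, and let $\mathcal{O}(\vec u,\vec v,\vec a)$ and $\mathcal{S}(\vec u,\vec v,\vec a)$ be pseudo-Boolean formulas such that $\mathcal{S}$ is a specification over $\vec a$. Suppose that there are cutting planes derivations showing (i) $\mathcal{S}(\vec x,\vec x,\vec a)\vdash\mathcal{O}(\vec x,\vec x,\vec a)$, and (ii) $\mathcal{S}(\vec x,\vec y,\vec a)\cup\mathcal{O}(\vec x,\vec y,\vec a)\cup\mathcal{S}(\vec y,\vec z,\vec b)\cup\mathcal{O}(\vec y,\vec z,\vec b)\cup\mathcal{S}(\vec x,\vec z,\vec c)\vdash\mathcal{O}(\vec x,\vec z,\vec c)$, where $\vec x,\vec y,\vec z$ are lists of $n$ variables and $\vec a,\vec b,\vec c$ are lists of fresh variables of the size of $\vec a$ (all pairwise disjoint). Then the relation $\preceq$ defined by $\mathcal{O}$ and $\mathcal{S}$ is a preorder (reflexive and transitive).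
   Context: PB constraints, formulas, substitutions, $\vdash$ (cutting planes derivability, which is sound) are as usual: a literal is $x$ or $\bar x=1-x$, a PB constraint is $\sum_i a_i\ell_i\ge A$ with negation $\sum_i a_i\bar\ell_i\ge\sum_i a_i-A+1$; for a formula $F(\vec u)$ and a list of literals/truth values $\vec w$ of equal length, $F(\vec w)$ denotes $F$ with each $u_i$ replaced by $w_i$. A formula $\mathcal{S}(\vec x,\vec a)=\{C_1,\dots,C_m\}$ is a specification over $\vec a$ if there are substitutions $\omega_1,\dots,\omega_m$ with $\mathrm{supp}(\omega_i)=\{x:\omega_i(x)\ne x\}\subseteq\vec a$ such that for each $i$, $\{C_1,\dots,C_{i-1},\neg C_i\}\vdash\{C_1{\upharpoonright}_{\omega_i},\dots,C_i{\upharpoonright}_{\omega_i}\}$. Relation defined by $\mathcal{O},\mathcal{S}$: for a list $\vec w$ of $n$ variables disjoint from $\vec a$ and total assignments $\alpha,\beta$ to $\vec w$, $\alpha\preceq\beta$ holds iff there exists an assignment $\rho$ to $\vec a$ such that $\mathcal{S}(\vec w{\upharpoonright}_\alpha,\vec w{\upharpoonright}_\beta,\vec a{\upharpoonright}_\rho)\wedge\mathcal{O}(\vec w{\upharpoonright}_\alpha,\vec w{\upharpoonright}_\beta,\vec a{\upharpoonright}_\rho)$ evaluates to true, where $\vec w{\upharpoonright}_\alpha$ denotes the list of values $\alpha(w_1),\dots,\alpha(w_n)$. *)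

(* Defs.v *)
From Stdlib Require Import ZArith List Lia RelationClasses.
Import ListNotations.
Open Scope Z_scope.

Definition var := nat.

(* A literal: x (lpos = true) or its negation xbar = 1 - x (lpos = false). *)
Record lit := Lit { lvar : var; lpos : bool }.

Definition negl (l : lit) : lit := Lit (lvar l) (negb (lpos l)).

(* A PB constraint  sum_i a_i l_i >= A  (integer coefficients). *)
Record constraint := Constr { terms : list (Z * lit); degree : Z }.

Definition formula := list constraint.

Definition assignment := var -> bool.

Definition lit_val (s : assignment) (l : lit) : bool :=
  if lpos l then s (lvar l) else negb (s (lvar l)).

Definition b2z (b : bool) : Z := if b then 1 else 0.

Definition lhs_val (s : assignment) (C : constraint) : Z :=
  fold_right Z.add 0 (map (fun t => fst t * b2z (lit_val s (snd t))) (terms C)).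

Definition sat_c (s : assignment) (C : constraint) : Prop := degree C <= lhs_val s C.

Definition sat (s : assignment) (F : formula) : Prop := forall C, In C F -> sat_c s C.

Definition sum_coefs (C : constraint) : Z := fold_right Z.add 0 (map fst (terms C)).

Definition negc (C : constraint) : constraint :=
  Constr (map (fun t => (fst t, negl (snd t))) (terms C)) (sum_coefs C - degree C + 1).

Inductive sterm := STLit (l : lit) | STConst (b : bool).

Definition subst := var -> sterm.

Definition id_subst : subst := fun x => STLit (Lit x true).

Definition supp_in (w : subst) (a : list var) : Prop :=
  forall x, w x <> STLit (Lit x true) -> In x a.

Definition subst_lit (w : subst) (l : lit) : sterm :=
  match w (lvar l) with
  | STLit l' => STLit (if lpos l then l' else negl l')
  | STConst b => STConst (if lpos l then b else negb b)
  end.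

(* C|w : literals mapped to literals are renamed; literals mapped to
   constants are evaluated and moved to the right-hand side. *)
Definition subst_terms (w : subst) (ts : list (Z * lit)) : list (Z * lit) :=
  flat_map (fun t => match subst_lit w (snd t) with
                     | STLit l' => [(fst t, l')]
                     | STConst _ => [] end) ts.

Definition subst_const (w : subst) (ts : list (Z * lit)) : Z :=
  fold_right Z.add 0
    (map (fun t => match subst_lit w (snd t) with
                   | STLit _ => 0
                   | STConst b => fst t * b2z b end) ts).

Definition subst_c (w : subst) (C : constraint) : constraint :=
  Constr (subst_terms w (terms C)) (degree C - subst_const w (terms C)).

Definition subst_f (w : subst) (F : formula) : formula := map (subst_c w) F.

Fixpoint subst_list (us : list var) (ws : list sterm) : subst :=
  match us, ws with
  | u :: us', w :: ws' => fun x => if Nat.eqb x u then w else subst_list us' ws' x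
  | _, _ => id_subst
  end.

Definition vlit (x : var) : sterm := STLit (Lit x true).

(* Constraints are reasoned about in linear form over variables:
   coefficient function and degree, after rewriting xbar = 1 - x. *)
Definition lin_coef (C : constraint) (x : var) : Z :=
  fold_right Z.add 0
    (map (fun t => if Nat.eqb (lvar (snd t)) x
                   then (if lpos (snd t) then fst t else - fst t) else 0) (terms C)).

Definition lin_deg (C : constraint) : Z :=
  degree C - fold_right Z.add 0
    (map (fun t => if lpos (snd t) then 0 else fst t) (terms C)).

Inductive cp (F : formula) : (var -> Z) -> Z -> Prop :=
| cp_axiom C : In C F -> cp F (lin_coef C) (lin_deg C)
| cp_litpos x : cp F (fun y => if Nat.eqb y x then 1 else 0) 0
| cp_litneg x : cp F (fun y => if Nat.eqb y x then -1 else 0) (-1)      (* xbar >= 0 *)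
| cp_add f A g B : cp F f A -> cp F g B -> cp F (fun y => f y + g y) (A + B)
| cp_mul c f A : 0 < c -> cp F f A -> cp F (fun y => c * f y) (c * A)
| cp_div d f A : 0 < d -> (forall y, (d | f y)) -> cp F f A ->
                 cp F (fun y => f y / d) (- ((- A) / d)).   (* ceil(A/d) *)

Definition derives (F : formula) (C : constraint) : Prop :=
  exists f, cp F f (lin_deg C) /\ forall y, f y = lin_coef C y.

Definition derives_all (F G : formula) : Prop := forall C, In C G -> derives F C.

Definition specification (S : formula) (a : list var) : Prop :=
  exists ws : list subst, length ws = length S /\
    forall i, (i < length S)%nat ->
      supp_in (nth i ws id_subst) a /\
      derives_all (firstn i S ++ [negc (nth i S (Constr [] 0))])
                  (subst_f (nth i ws id_subst) (firstn (Datatypes.S i) S)).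

Definition vars_in (F : formula) (vs : list var) : Prop :=
  forall C, In C F -> forall t, In t (terms C) -> In (lvar (snd t)) vs.

Definition disjoint (xs ys : list var) : Prop := forall x, In x xs -> ~ In x ys.

Definition inst (u v a : list var) (w1 w2 w3 : list sterm) (F : formula) : formula :=
  subst_f (subst_list (u ++ v ++ a) (w1 ++ w2 ++ w3)) F.

Definition cst (s : assignment) (xs : list var) : list sterm :=
  map (fun x => STConst (s x)) xs.

(* alpha <= beta iff there is rho to a such that
   S(w|alpha, w|beta, a|rho) /\ O(w|alpha, w|beta, a|rho) evaluates to true. *)
Definition rel (O S : formula) (u v a : list var) (w : list var)
  (alpha beta : assignment) : Prop :=
  exists rho : assignment,
    forall s : assignment,
      sat s (inst u v a (cst alpha w) (cst beta w) (cst rho a) (S ++ O)).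

(* Main.v *)
Require Import Defs.
From Stdlib Require Import ZArith List RelationClasses Permutation Lia Classical.
Import ListNotations.
Open Scope Z_scope.

Definition sumL (f : var -> Z) (s : assignment) (L : list var) : Z :=
  fold_right Z.add 0 (map (fun y => f y * b2z (s y)) L).

Lemma sumL_add f g s L : sumL (fun y => f y + g y) s L = sumL f s L + sumL g s L.
Proof. induction L; unfold sumL in *; simpl; [lia|]. rewrite IHL. lia. Qed.

Lemma sumL_mul c f s L : sumL (fun y => c * f y) s L = c * sumL f s L.
Proof. induction L; unfold sumL in *; simpl; [lia|]. rewrite IHL. lia. Qed.

Lemma sumL_ext f g s L : (forall y, f y = g y) -> sumL f s L = sumL g s L.
Proof. intro H; induction L; unfold sumL in *; simpl; [lia|]. rewrite IHL, H. lia. Qed.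

Lemma sumL_zero f s L : (forall y, In y L -> f y = 0) -> sumL f s L = 0.
Proof. induction L; intro H; unfold sumL in *; simpl; [lia|].
  rewrite IHL by (intros; apply H; simpl; auto). rewrite H by (simpl; auto). lia. Qed.

Lemma sumL_ind x c s L : NoDup L -> In x L ->
  sumL (fun y => if Nat.eqb x y then c else 0) s L = c * b2z (s x).
Proof.
  induction L as [|b L IH]; intros Hn Hin; [destruct Hin|].
  inversion Hn; subst.
  destruct (Nat.eqb x b) eqn:E.
  - apply Nat.eqb_eq in E; subst.
    assert (Z: sumL (fun y => if Nat.eqb b y then c else 0) s L = 0).
    { apply (sumL_zero _ s L). intros y Hy. destruct (Nat.eqb b y) eqn:E; auto.
      apply Nat.eqb_eq in E; subst; contradiction. }
    unfold sumL in *; simpl. rewrite Nat.eqb_refl. rewrite Z. lia.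
  - destruct Hin as [Hin|Hin]. { subst. rewrite Nat.eqb_refl in E. discriminate. }
    specialize (IH H2 Hin). unfold sumL in *; simpl; rewrite E. rewrite IH. lia.
Qed.

Lemma sumL_filter f s L : sumL f s L = sumL f s (filter (fun y => negb (f y =? 0)) L).
Proof. induction L; unfold sumL in *; simpl; auto.
  destruct (f a =? 0) eqn:E; simpl; rewrite IHL; auto.
  apply Z.eqb_eq in E; rewrite E; lia. Qed.

Lemma sumL_perm f s L1 L2 : Permutation L1 L2 -> sumL f s L1 = sumL f s L2.
Proof. induction 1; unfold sumL in *; simpl; lia. Qed.

Lemma sumL_same f s L1 L2 : NoDup L1 -> NoDup L2 ->
  (forall y, ~ In y L1 -> f y = 0) -> (forall y, ~ In y L2 -> f y = 0) ->
  sumL f s L1 = sumL f s L2.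
Proof.
  intros N1 N2 Z1 Z2. rewrite (sumL_filter f s L1), (sumL_filter f s L2).
  apply sumL_perm, NoDup_Permutation; try apply NoDup_filter; auto.
  intro y; rewrite !filter_In; split; intros [H1 H2]; split; auto.
  - destruct (in_dec Nat.eq_dec y L2); auto. rewrite Z2 in H2; auto. discriminate.
  - destruct (in_dec Nat.eq_dec y L1); auto. rewrite Z1 in H2; auto. discriminate.
Qed.

Definition lc (ts : list (Z * lit)) (x : var) : Z :=
  fold_right Z.add 0
    (map (fun t => if Nat.eqb (lvar (snd t)) x
                   then (if lpos (snd t) then fst t else - fst t) else 0) ts).
Definition negs (ts : list (Z * lit)) : Z :=
  fold_right Z.add 0 (map (fun t => if lpos (snd t) then 0 else fst t) ts).
Definition lhsl (s : assignment) (ts : list (Z * lit)) : Z :=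
  fold_right Z.add 0 (map (fun t => fst t * b2z (lit_val s (snd t))) ts).
Definition tvars (ts : list (Z * lit)) : list var := map (fun t => lvar (snd t)) ts.

Lemma lc_out ts y : ~ In y (tvars ts) -> lc ts y = 0.
Proof. induction ts as [|t ts IH]; simpl; auto. intro H.
  unfold lc; simpl. fold (lc ts y).
  destruct (Nat.eqb (lvar (snd t)) y) eqn:E.
  - apply Nat.eqb_eq in E. exfalso; apply H; auto.
  - rewrite IH; auto. Qed.

Lemma L5 s L ts : NoDup L -> (forall t, In t ts -> In (lvar (snd t)) L) ->
  sumL (lc ts) s L + negs ts = lhsl s ts.
Proof.
  intros N. induction ts as [|t ts IH]; intro H.
  - unfold lc, negs, lhsl; simpl. rewrite sumL_zero; auto.
  - assert (E: sumL (lc (t :: ts)) s L =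
       sumL (fun y => if Nat.eqb (lvar (snd t)) y
                   then (if lpos (snd t) then fst t else - fst t) else 0) s L
       + sumL (lc ts) s L) by (unfold lc; simpl; apply sumL_add).
    rewrite E. rewrite sumL_ind; auto; [|apply H; simpl; auto].
    specialize (IH (fun t' Ht => H t' (or_intror Ht))).
    unfold negs, lhsl in *; simpl.
    destruct t as [c [x p]]; simpl in *. rewrite <- IH.
    assert (E1: lit_val s (Lit x true) = s x) by reflexivity.
    assert (E2: lit_val s (Lit x false) = negb (s x)) by reflexivity.
    destruct p; [rewrite E1|rewrite E2];
    destruct (s x); simpl; lia.
Qed.

Lemma cp_sound F s : sat s F -> forall f A, cp F f A ->
  exists L, NoDup L /\ (forall y, ~ In y L -> f y = 0) /\ A <= sumL f s L.
Proof.
  intros HF f A H. induction H.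
  - exists (nodup Nat.eq_dec (tvars (terms C))). split; [apply NoDup_nodup|]. split.
    + intros y Hy. apply lc_out. rewrite <- (nodup_In Nat.eq_dec). auto.
    + pose proof (HF C H) as HC. change (degree C <= lhsl s (terms C)) in HC.
      change (degree C - negs (terms C) <= sumL (lc (terms C)) s (nodup Nat.eq_dec (tvars (terms C)))).
      rewrite <- (L5 s (nodup Nat.eq_dec (tvars (terms C))) (terms C)) in HC.
      * lia.
      * apply NoDup_nodup.
      * intros t Ht. apply nodup_In. unfold tvars. apply in_map_iff. eauto.
  - exists [x]. split; [constructor; auto; constructor|]. split.
    + intros y Hy. destruct (Nat.eqb y x) eqn:E; auto. apply Nat.eqb_eq in E; subst.
      exfalso; apply Hy; simpl; auto.
    + unfold sumL; simpl. rewrite Nat.eqb_refl. destruct (s x); simpl; lia.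
  - exists [x]. split; [constructor; auto; constructor|]. split.
    + intros y Hy. destruct (Nat.eqb y x) eqn:E; auto. apply Nat.eqb_eq in E; subst.
      exfalso; apply Hy; simpl; auto.
    + unfold sumL; simpl. rewrite Nat.eqb_refl. destruct (s x); simpl; lia.
  - destruct IHcp1 as [L1 [N1 [Z1 H1]]]. destruct IHcp2 as [L2 [N2 [Z2 H2]]].
    set (L := nodup Nat.eq_dec (L1 ++ L2)).
    assert (NL : NoDup L) by apply NoDup_nodup.
    assert (IL : forall y, ~ In y L -> ~ In y L1 /\ ~ In y L2).
    { intros y Hy; split; intro Hc; apply Hy; apply nodup_In; apply in_or_app; auto. }
    exists L. split; auto. split.
    + intros y Hy. destruct (IL y Hy). rewrite Z1, Z2; auto.
    + rewrite sumL_add.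
      rewrite (sumL_same f s L L1), (sumL_same g s L L2); auto; [lia| |].
      * intros y Hy; apply Z2, (IL y Hy).
      * intros y Hy; apply Z1, (IL y Hy).
  - destruct IHcp as [L [N [Zs H1]]]. exists L. split; auto. split.
    + intros y Hy; rewrite Zs; auto; lia.
    + rewrite sumL_mul. apply Z.mul_le_mono_nonneg_l; lia.
  - destruct IHcp as [L [N [Zs H2]]]. exists L. split; auto. split.
    + intros y Hy; rewrite Zs; auto.
    + assert (E : sumL f s L = d * sumL (fun y => f y / d) s L).
      { rewrite <- sumL_mul. apply sumL_ext. intro y. destruct (H0 y) as [k Hk].
        rewrite Hk, Z.div_mul by lia. lia. }
      set (q := sumL (fun y => f y / d) s L) in *.
      assert (- q <= (- A) / d).
      { apply Z.div_le_lower_bound; [lia|]. rewrite Z.mul_opp_r, <- E. lia. }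
      set (r := (- A) / d) in *. lia.
Qed.

Lemma derives_sound F C s : sat s F -> derives F C -> sat_c s C.
Proof.
  intros HF [f [Hcp Hf]]. destruct (cp_sound F s HF f _ Hcp) as [L [N [Zs H]]].
  set (Lc := nodup Nat.eq_dec (tvars (terms C))).
  rewrite (sumL_ext f (lin_coef C)) in H by auto.
  rewrite (sumL_same (lin_coef C) s L Lc) in H; auto.
  - unfold Lc in H. pose proof (L5 s (nodup Nat.eq_dec (tvars (terms C))) (terms C)) as E.
    change (lin_deg C) with (degree C - negs (terms C)) in H.
    change (lin_coef C) with (lc (terms C)) in H.
    change (degree C <= lhsl s (terms C)).
    rewrite <- E. lia. apply NoDup_nodup.
    intros t Ht. apply nodup_In. unfold tvars. apply in_map_iff. eauto.
  - apply NoDup_nodup.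
  - intros y Hy; rewrite <- Hf; auto.
  - intros y Hy. apply lc_out. rewrite <- (nodup_In Nat.eq_dec). auto.
Qed.

Lemma derives_all_sound F G s : sat s F -> derives_all F G -> sat s G.
Proof. intros HF HD C HC. apply (derives_sound F); auto. Qed.

Definition ev (s : assignment) (t : sterm) : bool :=
  match t with STLit l => lit_val s l | STConst b => b end.

Lemma lit_val_negl s l : lit_val s (negl l) = negb (lit_val s l).
Proof. destruct l as [x [|]]; unfold lit_val, negl; simpl; auto. rewrite Bool.negb_involutive; auto. Qed.

Lemma lhsl_app s l1 l2 : lhsl s (l1 ++ l2) = lhsl s l1 + lhsl s l2.
Proof. induction l1; unfold lhsl in *; simpl; lia. Qed.

Lemma subst_term s w c l :
  c * b2z (lit_val (fun x => ev s (w x)) l) =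
  lhsl s (match subst_lit w l with STLit l' => [(c, l')] | STConst _ => [] end) +
  (match subst_lit w l with STLit _ => 0 | STConst b => c * b2z b end).
Proof.
  destruct l as [x p]. unfold subst_lit, lit_val; simpl.
  destruct (w x) as [l'|b]; destruct p; simpl; unfold lhsl; simpl.
  - lia.
  - rewrite lit_val_negl. lia.
  - lia.
  - lia.
Qed.

Lemma subst_lhs s w ts :
  lhsl (fun x => ev s (w x)) ts = lhsl s (subst_terms w ts) + subst_const w ts.
Proof.
  induction ts as [|[c l] ts IH]; [reflexivity|].
  unfold subst_terms, subst_const in *. cbn [flat_map map fold_right].
  rewrite lhsl_app.
  change (lhsl (fun x0 => ev s (w x0)) ((c, l) :: ts))
    with (c * b2z (lit_val (fun x0 => ev s (w x0)) l) + lhsl (fun x0 => ev s (w x0)) ts).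
  rewrite IH, subst_term. simpl snd. simpl fst. lia.
Qed.

Lemma subst_sat_c s w C : sat_c s (subst_c w C) <-> sat_c (fun x => ev s (w x)) C.
Proof.
  unfold sat_c, subst_c, lhs_val; simpl.
  change (degree C - subst_const w (terms C) <= lhsl s (subst_terms w (terms C)) <->
          degree C <= lhsl (fun x => ev s (w x)) (terms C)).
  rewrite subst_lhs. lia.
Qed.

Lemma subst_sat s w F : sat s (subst_f w F) <-> sat (fun x => ev s (w x)) F.
Proof.
  unfold sat, subst_f. split.
  - intros H C HC. apply subst_sat_c. apply H. apply in_map; auto.
  - intros H C HC. apply in_map_iff in HC. destruct HC as [C0 [<- HC0]].
    apply subst_sat_c. auto.
Qed.

Lemma agree_sat s1 s2 F L : vars_in F L -> (forall x, In x L -> s1 x = s2 x) ->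
  (sat s1 F <-> sat s2 F).
Proof.
  intros HV HA.
  assert (K : forall C, In C F -> lhsl s1 (terms C) = lhsl s2 (terms C)).
  { intros C HC. pose proof (HV C HC) as HT. clear HC.
    induction (terms C) as [|[c [x p]] ts IH]; [reflexivity|].
    unfold lhsl in *; simpl.
    rewrite IH by (intros t Ht; apply HT; simpl; auto).
    assert (Hx : s1 x = s2 x) by (apply HA; apply (HT (c, Lit x p)); simpl; auto).
    unfold lit_val; simpl. rewrite Hx. reflexivity. }
  unfold sat, sat_c, lhs_val. split; intros H C HC; specialize (H C HC);
  change (lhsl s1 (terms C)) with (fold_right Z.add 0 (map (fun t => fst t * b2z (lit_val s1 (snd t))) (terms C))) in *;
  pose proof (K C HC); unfold lhsl in *; lia.
Qed.

Lemma subst_list_agree s1 s2 us ws1 ws2 x :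
  length us = length ws1 -> map (ev s1) ws1 = map (ev s2) ws2 -> In x us ->
  ev s1 (subst_list us ws1 x) = ev s2 (subst_list us ws2 x).
Proof.
  revert ws1 ws2; induction us as [|u us IH]; intros ws1 ws2 Hl Hm Hx; [destruct Hx|].
  destruct ws1 as [|w1 ws1]; [discriminate|]. destruct ws2 as [|w2 ws2]; [discriminate|].
  simpl in Hm. injection Hm as H1 H2. simpl.
  destruct (Nat.eqb x u) eqn:E; auto.
  apply IH; auto. destruct Hx; auto. subst. rewrite Nat.eqb_refl in E; discriminate.
Qed.

Lemma subst_list_id s us x : In x us -> ev s (subst_list us (map vlit us) x) = s x.
Proof.
  induction us as [|u us IH]; intros Hx; [destruct Hx|]. simpl.
  destruct (Nat.eqb x u) eqn:E.
  - apply Nat.eqb_eq in E; subst; reflexivity.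
  - apply IH. destruct Hx; auto. subst. rewrite Nat.eqb_refl in E; discriminate.
Qed.

Lemma M s1 s2 us ws1 ws2 F : vars_in F us -> length us = length ws1 ->
  map (ev s1) ws1 = map (ev s2) ws2 ->
  (sat s1 (subst_f (subst_list us ws1) F) <-> sat s2 (subst_f (subst_list us ws2) F)).
Proof.
  intros HV Hl Hm. rewrite !subst_sat. apply (agree_sat _ _ F us HV).
  intros; apply subst_list_agree; auto.
Qed.

Lemma KEY s t us ws F : vars_in F us -> length us = length ws ->
  map (ev s) ws = map t us ->
  (sat s (subst_f (subst_list us ws) F) <-> sat t F).
Proof.
  intros HV Hl Hm. rewrite (M s t us ws (map vlit us)); auto.
  - rewrite subst_sat. apply (agree_sat _ _ F us HV). intros; apply subst_list_id; auto.
  - rewrite Hm, map_map. reflexivity.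
Qed.

Lemma sat_app s F G : sat s (F ++ G) <-> sat s F /\ sat s G.
Proof. unfold sat; split.
  - intro H; split; intros C HC; apply H; apply in_or_app; auto.
  - intros [H1 H2] C HC; apply in_app_or in HC; destruct HC; auto. Qed.

Lemma subst_f_app w F G : subst_f w (F ++ G) = subst_f w F ++ subst_f w G.
Proof. apply map_app. Qed.

Lemma vars_app F G L : vars_in F L -> vars_in G L -> vars_in (F ++ G) L.
Proof. intros H1 H2 C HC; apply in_app_or in HC; destruct HC; [apply H1|apply H2]; auto. Qed.

Lemma ev_cst s f l : map (ev s) (cst f l) = map f l.
Proof. unfold cst; rewrite map_map; reflexivity. Qed.
Lemma ev_vlit s l : map (ev s) (map vlit l) = map s l.
Proof. rewrite map_map; reflexivity. Qed.

Lemma ex_assign xs (bs : list bool) : NoDup xs -> length xs = length bs ->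
  exists s : assignment, map s xs = bs.
Proof.
  revert bs; induction xs as [|x xs IH]; intros bs N Hl; destruct bs as [|b bs]; try discriminate.
  - exists (fun _ => false); reflexivity.
  - inversion N; subst. destruct (IH bs) as [s' Hs']; auto.
    exists (fun y => if Nat.eqb y x then b else s' y). simpl. rewrite Nat.eqb_refl. f_equal.
    rewrite <- Hs'. apply map_ext_in. intros y Hy. destruct (Nat.eqb y x) eqn:E; auto.
    apply Nat.eqb_eq in E; subst; contradiction.
Qed.

Lemma app_split {A} (l1 l2 l1' l2' : list A) : length l1 = length l1' ->
  l1 ++ l2 = l1' ++ l2' -> l1 = l1' /\ l2 = l2'.
Proof.
  revert l1'; induction l1; intros [|b l1'] Hl He; try discriminate; auto.
  simpl in He; injection He as -> He. destruct (IHl1 l1') as [-> ->]; auto.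
Qed.

Lemma nodup_disj {A} (l1 l2 : list A) x : NoDup (l1 ++ l2) -> In x l1 -> ~ In x l2.
Proof.
  induction l1; intros N H; [destruct H|]. inversion N; subst.
  destruct H; auto. subst. intro Hc; apply H2, in_or_app; auto.
Qed.

Lemma firstn_S_nth {A} (l : list A) k d : (k < length l)%nat ->
  firstn (Datatypes.S k) l = firstn k l ++ [nth k l d].
Proof.
  revert k; induction l; intros k Hk; simpl in Hk; [lia|].
  destruct k; [reflexivity|]. cbn [firstn nth app]. f_equal. apply IHl. lia.
Qed.

Lemma negc_sat s C : ~ sat_c s C -> sat_c s (negc C).
Proof.
  unfold sat_c, negc, lhs_val, sum_coefs; simpl. intro H.
  assert (E : forall ts, fold_right Z.add 0 (map (fun t => fst t * b2z (lit_val s (snd t)))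
             (map (fun t => (fst t, negl (snd t))) ts)) =
          fold_right Z.add 0 (map fst ts) -
          fold_right Z.add 0 (map (fun t => fst t * b2z (lit_val s (snd t))) ts)).
  { induction ts as [|[c l] ts IH]; simpl; auto. rewrite IH, lit_val_negl.
    destruct (lit_val s l); simpl; lia. }
  rewrite E. lia.
Qed.

Lemma spec_sat S a : specification S a -> forall t : assignment,
  exists t', (forall x, ~ In x a -> t' x = t x) /\ sat t' S.
Proof.
  intros [ws [Hlen Hws]] t.
  assert (G : forall k, (k <= length S)%nat ->
     exists t', (forall x, ~ In x a -> t' x = t x) /\ sat t' (firstn k S)).
  { induction k; intro Hk.
    - exists t; split; auto. intros C HC; destruct HC.
    - destruct IHk as [t1 [A1 S1]]; [lia|].
      rewrite (firstn_S_nth S k (Constr [] 0)) by lia.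
      destruct (Z_le_dec (degree (nth k S (Constr [] 0))) (lhs_val t1 (nth k S (Constr [] 0)))) as [Hc|Hc].
      + exists t1; split; auto. apply sat_app; split; auto.
        intros C [<-|[]]; exact Hc.
      + destruct (Hws k ltac:(lia)) as [Hsupp Hder].
        set (w := nth k ws id_subst) in *.
        assert (Hs : sat t1 (firstn k S ++ [negc (nth k S (Constr [] 0))])).
        { apply sat_app; split; auto. intros C [<-|[]]. apply negc_sat. exact Hc. }
        pose proof (derives_all_sound _ _ _ Hs Hder) as Hs2.
        apply subst_sat in Hs2.
        exists (fun x => ev t1 (w x)). split.
        * intros x Hx. destruct (w x) eqn:Ew.
          -- assert (w x = STLit (Lit x true)).
             { apply NNPP; intro Hn. apply Hx, Hsupp; auto. }
             rewrite Ew in H; injection H as ->. simpl. apply A1; auto.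
          -- exfalso. apply Hx, Hsupp. rewrite Ew. discriminate.
        * rewrite <- (firstn_S_nth S k (Constr [] 0)) by lia. exact Hs2. }
  destruct (G (length S) ltac:(lia)) as [t' [H1 H2]]. rewrite firstn_all in H2. eauto.
Qed.
Close Scope Z_scope.

Theorem lemma2 (n : nat) (u v a : list var) (O S : formula) :
  length u = n -> length v = n -> NoDup (u ++ v ++ a) ->
  vars_in O (u ++ v ++ a) -> vars_in S (u ++ v ++ a) ->
  specification S a ->
  (exists x a1 : list var,
      length x = n /\ length a1 = length a /\ NoDup (x ++ a1) /\
      derives_all (inst u v a (map vlit x) (map vlit x) (map vlit a1) S)
                  (inst u v a (map vlit x) (map vlit x) (map vlit a1) O)) ->
  (exists x y z a1 b1 c1 : list var,
      length x = n /\ length y = n /\ length z = n /\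
      length a1 = length a /\ length b1 = length a /\ length c1 = length a /\
      NoDup (x ++ y ++ z ++ a1 ++ b1 ++ c1) /\
      derives_all
        (inst u v a (map vlit x) (map vlit y) (map vlit a1) S ++
         inst u v a (map vlit x) (map vlit y) (map vlit a1) O ++
         inst u v a (map vlit y) (map vlit z) (map vlit b1) S ++
         inst u v a (map vlit y) (map vlit z) (map vlit b1) O ++
         inst u v a (map vlit x) (map vlit z) (map vlit c1) S)
        (inst u v a (map vlit x) (map vlit z) (map vlit c1) O)) ->
  forall w : list var, length w = n -> disjoint w a ->
    PreOrder (rel O S u v a w).
Proof.
  intros Hu Hv Hnd HvO HvS Hspec Hi Hii w Hw Hwa.
  set (us := u ++ v ++ a) in *.
  assert (HvSO : vars_in (S ++ O) us) by (apply vars_app; auto).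
  assert (Hlus : length us = (n + n + length a)%nat)
    by (unfold us; rewrite !length_app; lia).
  assert (GE : forall al ga : assignment, exists t',
     map t' u = map al w /\ map t' v = map ga w /\ sat t' S).
  { intros al ga.
    destruct (ex_assign us (map al w ++ map ga w ++ map (fun _ => false) a)) as [t Ht]; auto.
    { rewrite Hlus, !length_app, !length_map; lia. }
    unfold us in Ht. rewrite !map_app in Ht.
    apply app_split in Ht; [|rewrite !length_map; lia]. destruct Ht as [Ht1 Ht].
    apply app_split in Ht; [|rewrite !length_map; lia]. destruct Ht as [Ht2 _].
    destruct (spec_sat S a Hspec t) as [t' [Ha Hs]].
    exists t'. split; [|split]; auto.
    - rewrite <- Ht1. apply map_ext_in. intros x Hx. apply Ha.
      intro Hc. apply (nodup_disj u (v ++ a) x Hnd Hx). apply in_or_app; auto.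
    - rewrite <- Ht2. apply map_ext_in. intros x Hx. apply Ha.
      apply NoDup_app_remove_l in Hnd. apply (nodup_disj v a x Hnd Hx). }
  assert (RED : forall al ga t', map t' u = map al w -> map t' v = map ga w ->
     sat t' (S ++ O) -> rel O S u v a w al ga).
  { intros al ga t' H1 H2 H3. exists t'. intro s. unfold inst.
    fold us. rewrite (KEY s t' us _ (S ++ O)); auto.
    - unfold cst; rewrite !length_app, !length_map; lia.
    - rewrite !map_app, !ev_cst. unfold us; rewrite !map_app, H1, H2. reflexivity. }
  constructor.
  - intro al. destruct (GE al al) as [t' [H1 [H2 H3]]].
    apply (RED al al t' H1 H2). apply sat_app; split; auto.
    destruct Hi as [x [a1 [Hx [Ha1 [Hnx Hder]]]]].
    destruct (ex_assign (x ++ a1) (map al w ++ map t' a)) as [sx Hsx]; auto.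
    { rewrite !length_app, !length_map; lia. }
    rewrite map_app in Hsx. apply app_split in Hsx; [|rewrite !length_map; lia].
    destruct Hsx as [E1 E2].
    assert (Emap : map (ev sx) (map vlit x ++ map vlit x ++ map vlit a1) = map t' us).
    { rewrite !map_app, !ev_vlit, E1, E2. unfold us; rewrite !map_app, H1, H2. reflexivity. }
    assert (Hl : length us = length (map vlit x ++ map vlit x ++ map vlit a1))
      by (rewrite !length_app, !length_map; lia).
    unfold inst in Hder. fold us in Hder.
    set (ws := map vlit x ++ map vlit x ++ map vlit a1) in *.
    apply (KEY sx t' us ws O); auto.
    apply (derives_all_sound _ _ _ ltac:(apply (KEY sx t' us ws S); auto) Hder).
  - intros al be ga [r1 Hr1] [r2 Hr2].
    destruct (GE al ga) as [t' [H1 [H2 H3]]].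
    apply (RED al ga t' H1 H2). apply sat_app; split; auto.
    destruct Hii as [x [y [z [a1 [b1 [c1 [Hx [Hy [Hz [Ha1 [Hb1 [Hc1 [Hnx Hder]]]]]]]]]]]]].
    destruct (ex_assign (x ++ y ++ z ++ a1 ++ b1 ++ c1)
       (map al w ++ map be w ++ map ga w ++ map r1 a ++ map r2 a ++ map t' a)) as [s0 Hs0]; auto.
    { rewrite !length_app, !length_map; lia. }
    rewrite !map_app in Hs0.
    apply app_split in Hs0; [|rewrite !length_map; lia]. destruct Hs0 as [Ex Hs0].
    apply app_split in Hs0; [|rewrite !length_map; lia]. destruct Hs0 as [Ey Hs0].
    apply app_split in Hs0; [|rewrite !length_map; lia]. destruct Hs0 as [Ez Hs0].
    apply app_split in Hs0; [|rewrite !length_map; lia]. destruct Hs0 as [Ea1 Hs0].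
    apply app_split in Hs0; [|rewrite !length_map; lia]. destruct Hs0 as [Eb1 Ec1].
    unfold inst in Hder. fold us in Hder.
    assert (P1 : sat s0 (subst_f (subst_list us (map vlit x ++ map vlit y ++ map vlit a1)) (S ++ O))).
    { assert (L1 : length us = length (map vlit x ++ map vlit y ++ map vlit a1))
        by (rewrite !length_app, !length_map; lia).
      assert (M1 : map (ev s0) (map vlit x ++ map vlit y ++ map vlit a1) =
                   map (ev s0) (cst al w ++ cst be w ++ cst r1 a))
        by (rewrite !map_app, !ev_vlit, !ev_cst, Ex, Ey, Ea1; reflexivity).
      rewrite (M s0 s0 us _ _ (S ++ O) HvSO L1 M1). apply Hr1. }
    assert (P2 : sat s0 (subst_f (subst_list us (map vlit y ++ map vlit z ++ map vlit b1)) (S ++ O))).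
    { assert (L1 : length us = length (map vlit y ++ map vlit z ++ map vlit b1))
        by (rewrite !length_app, !length_map; lia).
      assert (M1 : map (ev s0) (map vlit y ++ map vlit z ++ map vlit b1) =
                   map (ev s0) (cst be w ++ cst ga w ++ cst r2 a))
        by (rewrite !map_app, !ev_vlit, !ev_cst, Ey, Ez, Eb1; reflexivity).
      rewrite (M s0 s0 us _ _ (S ++ O) HvSO L1 M1). apply Hr2. }
    assert (Emap : map (ev s0) (map vlit x ++ map vlit z ++ map vlit c1) = map t' us).
    { rewrite !map_app, !ev_vlit, Ex, Ez, Ec1. unfold us; rewrite !map_app, H1, H2. reflexivity. }
    assert (Hl : length us = length (map vlit x ++ map vlit z ++ map vlit c1))
      by (rewrite !length_app, !length_map; lia).
    assert (P3 : sat s0 (subst_f (subst_list us (map vlit x ++ map vlit z ++ map vlit c1)) S))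
      by (apply (KEY s0 t' us (map vlit x ++ map vlit z ++ map vlit c1) S); auto).
    rewrite subst_f_app in P1, P2. apply sat_app in P1, P2.
    destruct P1 as [P1a P1b]; destruct P2 as [P2a P2b].
    apply (KEY s0 t' us (map vlit x ++ map vlit z ++ map vlit c1) O); auto.
    apply (derives_all_sound _ _ _ ltac:(apply sat_app; split; [exact P1a|]; apply sat_app; split; [exact P1b|]; apply sat_app; split; [exact P2a|]; apply sat_app; split; [exact P2b|exact P3]) Hder).
Qed.
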